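(* Let $n\ge1$ and $f,g\in\Lambda_n$ with $f\ne0$ and $f\cdot g\in\mathrm{im}(\nu_{n-1/n})$. If $\mu(f)=0$ and $\lambda(f)<p^{n-1}$, then $g\in\mathrm{im}(\nu_{n-1/n})$.
   Context: Let $p$ be an odd prime. For $n\ge0$ let $G_n$ be a cyclic group of order $p^n$ with surjections $G_n\to G_{n-1}$, $\Lambda_n=\mathbf{Z}_p[G_n]$, $\widetilde\Lambda_n=\mathbf{F}_p[G_n]$ and $\widetilde I_n$ the augmentation ideal of $\widetilde\Lambda_n$. For nonzero $f\in\Lambda_n$, $\mu(f)$ is the unique integer with $f\in p^{\mu(f)}\Lambda_n\setminus p^{\mu(f)+1}\Lambda_n$, and $\lambda(f)$ is the unique integer such that the reduction mod $p$ of $p^{-\mu(f)}f$ lies in $\widetilde I_n^{\lambda(f)}\setminus\widetilde I_n^{\lambda(f)+1}$. $\nu_{n-1/n}:\Lambda_{n-1}\to\Lambda_n$ is the $\mathbf{Z}_p$-linear map with $\nu_{n-1/n}(\sigma)=\sum_{\tau\in G_n,\ \tau\mapsto\sigma}\tau$ for $\sigma\in G_{n-1}$. *)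

(* Defs.v *)
From mathcomp Require Import all_boot all_algebra.
Set Implicit Arguments. Unset Strict Implicit. Unset Printing Implicit Defensive.
Import GRing.Theory.

(* The p-adic integers Z_p, as coherent sequences of residues:        *)
(* x k is the residue mod p^k, with x (k+1) = x k (mod p^k).          *)
Definition coherent (p : nat) (x : nat -> nat) : Prop :=
  forall k, x k.+1 %% p ^ k = x k /\ x k %% p ^ k = x k.

Definition Zp (p : nat) := {x : nat -> nat | coherent p x}.

Lemma dvd_pk (p k : nat) : p ^ k %| p ^ k.+1.
Proof. by rewrite expnS dvdn_mull. Qed.

Lemma zp_nat_coh (p m : nat) : coherent p (fun k => m %% p ^ k).
Proof. by move=> k; rewrite modn_dvdm ?dvd_pk // modn_mod. Qed.

Definition zp_nat (p m : nat) : Zp p := exist _ _ (zp_nat_coh p m).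
Definition zp0 (p : nat) : Zp p := zp_nat p 0.

Lemma zp_add_coh (p : nat) (x y : Zp p) :
  coherent p (fun k => (sval x k + sval y k) %% p ^ k).
Proof.
case: x y => [x hx] [y hy] k /=; rewrite modn_mod; split=> //.
by rewrite modn_dvdm ?dvd_pk // -modnDm (hx k).1 (hy k).1.
Qed.

Lemma zp_mul_coh (p : nat) (x y : Zp p) :
  coherent p (fun k => (sval x k * sval y k) %% p ^ k).
Proof.
case: x y => [x hx] [y hy] k /=; rewrite modn_mod; split=> //.
by rewrite modn_dvdm ?dvd_pk // -modnMm (hx k).1 (hy k).1.
Qed.

Definition zp_add (p : nat) (x y : Zp p) : Zp p := exist _ _ (zp_add_coh x y).
Definition zp_mul (p : nat) (x y : Zp p) : Zp p := exist _ _ (zp_mul_coh x y).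

(* G_n = Z/p^n Z, modelled by 'I_(p^n) with addition mod p^n; the     *)
(* surjection G_n -> G_(n-1) is reduction mod p^(n-1).                *)
(* Lambda_n = Z_p[G_n]: functions G_n -> Z_p (coefficients).           *)
Definition Lam (p n : nat) := 'I_(p ^ n) -> Zp p.

Definition lam0 (p n : nat) : Lam p n := fun _ => zp0 p.

Definition lmul (p n : nat) (f g : Lam p n) : Lam p n := fun c =>
  \big[@zp_add p/zp0 p]_(a < p ^ n)
    \big[@zp_add p/zp0 p]_(b < p ^ n | (a + b) %% p ^ n == c)
      zp_mul (f a) (g b).

(* nu_{n-1/n} : Lambda_{n-1} -> Lambda_n, Z_p-linear extension of
   sigma |-> sum_{tau |-> sigma} tau; the coefficient of tau in nu h is
   the sum of h sigma over the sigma with tau |-> sigma. *)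
Definition nu (p n : nat) (h : Lam p n.-1) : Lam p n := fun t =>
  \big[@zp_add p/zp0 p]_(s < p ^ n.-1 | t %% p ^ n.-1 == s) h s.

Definition im_nu (p n : nat) (F : Lam p n) : Prop :=
  exists h : Lam p n.-1, forall t, F t = nu h t.

Definition in_pow_p (p n m : nat) (f : Lam p n) : Prop :=
  exists h : Lam p n, forall t, f t = zp_mul (zp_nat p (p ^ m)) (h t).

Definition mu_eq (p n : nat) (f : Lam p n) (m : nat) : Prop :=
  in_pow_p m f /\ ~ in_pow_p m.+1 f.

Definition FG (p n : nat) := {ffun 'I_(p ^ n) -> 'F_p}.

Definition fmul (p n : nat) (x y : FG p n) : FG p n := [ffun c : 'I_(p ^ n) =>
  (\sum_(a < p ^ n) \sum_(b < p ^ n | ((a + b) %% p ^ n)%N == c) x a * y b)%R].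

Definition aug (p n : nat) (x : FG p n) : bool := (\sum_t x t == 0)%R.

Fixpoint ipow (p n k : nat) (x : FG p n) {struct k} : Prop :=
  match k with
  | 0 => True
  | k'.+1 => exists s : seq (FG p n * FG p n),
      (forall ab, ab \in s -> aug ab.1 /\ ipow k' ab.2) /\
      x = (\sum_(ab <- s) fmul ab.1 ab.2)%R
  end.

Definition red (p n : nat) (f : Lam p n) : FG p n :=
  [ffun t => ((sval (f t)) 1)%:R]%R.

Definition lam_eq (p n : nat) (f : Lam p n) (l : nat) : Prop :=
  exists (m : nat) (f' : Lam p n), mu_eq f m /\
    (forall t, f t = zp_mul (zp_nat p (p ^ m)) (f' t)) /\
    ipow l (red f') /\ ~ ipow l.+1 (red f').

(* Main.v *)
Require Import Defs.
From mathcomp Require Import all_boot all_algebra.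
From mathcomp Require Import zify ring.
From Stdlib Require Import ProofIrrelevance FunctionalExtensionality.
Set Implicit Arguments. Unset Strict Implicit. Unset Printing Implicit Defensive.
Import GRing.Theory.

Module Aux.
Local Open Scope ring_scope.

Section Gen.
Variable R : comNzRingType.
Variable N : nat.
Implicit Types P Q d : {poly R}.

Definition penc (F : 'I_N -> R) : {poly R} := \sum_(t < N) F t *: 'X^t.

Lemma coef_penc F i : (penc F)`_i = \sum_(t < N) F t * (i == t)%:R.
Proof. by rewrite coef_sum; apply: eq_bigr => t _; rewrite coefZ coefXn. Qed.

Lemma coef_penc_ord F (t : 'I_N) : (penc F)`_t = F t.
Proof.
rewrite coef_penc (bigD1 t) //= eqxx mulr1 big1 ?addr0 // => u ut.
by rewrite eq_sym (inj_eq val_inj) (negbTE ut) mulr0.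
Qed.

Lemma coef_penc_ge F i : (N <= i)%N -> (penc F)`_i = 0.
Proof.
move=> hi; rewrite coef_penc big1 // => t _.
by rewrite gtn_eqF ?mulr0 // (leq_trans (ltn_ord t) hi).
Qed.

Lemma size_penc F : (size (penc F) <= N)%N.
Proof. by apply/leq_sizeP => j hj; rewrite coef_penc_ge. Qed.

Lemma penc_coef P : (size P <= N)%N -> penc (fun t => P`_t) = P.
Proof.
move=> hP; apply/polyP => i; case: (ltnP i N) => hi.
  by rewrite (coef_penc_ord _ (Ordinal hi)).
by rewrite coef_penc_ge //; move/leq_sizeP: hP => ->.
Qed.

Lemma penc_inj F G : penc F = penc G -> forall t, F t = G t.
Proof. by move=> e t; rewrite -coef_penc_ord e coef_penc_ord. Qed.

Lemma pencD F G : penc (fun t => F t + G t) = penc F + penc G.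
Proof. by rewrite -big_split; apply: eq_bigr => t _; rewrite scalerDl. Qed.

Lemma pencN F : penc (fun t => - F t) = - penc F.
Proof. by rewrite -sumrN; apply: eq_bigr => t _; rewrite scaleNr. Qed.

Lemma pencZ c F : penc (fun t => c * F t) = c *: penc F.
Proof. by rewrite scaler_sumr; apply: eq_bigr => t _; rewrite scalerA. Qed.

Lemma penc_sum (I : Type) (r : seq I) (F : I -> 'I_N -> R) :
  penc (fun t => \sum_(i <- r) F i t) = \sum_(i <- r) penc (F i).
Proof.
rewrite exchange_big; apply: eq_bigr => t _; by rewrite scaler_suml.
Qed.

Definition mdvd d P := exists Q, P = d * Q.

Lemma mdvd0 d : mdvd d 0. Proof. by exists 0; rewrite mulr0. Qed.
Lemma mdvdD d P Q : mdvd d P -> mdvd d Q -> mdvd d (P + Q).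
Proof. by move=> [A ->] [B ->]; exists (A + B); rewrite mulrDr. Qed.
Lemma mdvdN d P : mdvd d P -> mdvd d (- P).
Proof. by move=> [A ->]; exists (- A); rewrite mulrN. Qed.
Lemma mdvdB d P Q : mdvd d P -> mdvd d Q -> mdvd d (P - Q).
Proof. by move=> hP hQ; apply: mdvdD => //; apply: mdvdN. Qed.
Lemma mdvdMl d P Q : mdvd d P -> mdvd d (Q * P).
Proof. by move=> [A ->]; exists (Q * A); rewrite mulrCA. Qed.
Lemma mdvdZ d c P : mdvd d P -> mdvd d (c *: P).
Proof. by move=> [A ->]; exists (c *: A); rewrite scalerAr. Qed.
Lemma mdvd_sum d (I : Type) (r : seq I) (F : I -> {poly R}) :
  (forall i, mdvd d (F i)) -> mdvd d (\sum_(i <- r) F i).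
Proof.
move=> h; elim: r => [|a r IH]; first by rewrite big_nil; apply: mdvd0.
by rewrite big_cons; apply: mdvdD.
Qed.
Lemma mdvd_id d : mdvd d d. Proof. by exists 1; rewrite mulr1. Qed.

Lemma Xmod m : (0 < N)%N -> mdvd ('X^N - 1) ('X^m - 'X^(m %% N)).
Proof.
move=> N0; rewrite {1}(divn_eq m N) exprD mulnC exprM -{2}['X^(m %% N)]mul1r.
rewrite -mulrBl (subrX1 ('X^N)); exists ((\sum_(i < m %/ N) ('X^N) ^+ i) * 'X^(m %% N)).
by rewrite mulrA.
Qed.

Definition conv (F G : 'I_N -> R) (c : 'I_N) :=
  \sum_(a < N) \sum_(b < N | ((a + b) %% N)%N == c) F a * G b.

Lemma penc_conv F G : (0 < N)%N ->
  mdvd ('X^N - 1) (penc F * penc G - penc (conv F G)).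
Proof.
move=> N0.
have E1 : penc F * penc G = \sum_(a < N) \sum_(b < N) (F a * G b) *: 'X^(a + b).
  rewrite mulr_suml; apply: eq_bigr => a _; rewrite mulr_sumr.
  apply: eq_bigr => b _; rewrite -scalerAl -scalerAr scalerA exprD.
  by [].
have E2 : penc (conv F G) =
    \sum_(a < N) \sum_(b < N) (F a * G b) *: 'X^((a + b) %% N).
  rewrite /penc /conv.
  under eq_bigr do rewrite scaler_suml.
  rewrite exchange_big; apply: eq_bigr => a _.
  under eq_bigr do rewrite scaler_suml big_mkcond.
  rewrite exchange_big; apply: eq_bigr => b _.
  pose c0 : 'I_N := Ordinal (ltn_pmod (a + b) N0).
  rewrite (bigD1 c0) //= eqxx big1 ?addr0 // => c cc0.
  case: eqP => // hc; case/negP: cc0; apply/eqP/val_inj => /=; by rewrite hc.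
rewrite E1 E2 -sumrB; apply: mdvd_sum => a; rewrite -sumrB; apply: mdvd_sum => b.
by rewrite -scalerBr; apply: mdvdZ; apply: Xmod.
Qed.

End Gen.

Section Shift.
Variable N M : nat.
Hypothesis N0 : (0 < N)%N.
Hypothesis MN : (M <= N)%N.

Definition sh (s : 'I_N) : 'I_N := Ordinal (ltn_pmod (s + (N - M)) N0).
Definition up (s : 'I_N) : 'I_N := Ordinal (ltn_pmod (s + M) N0).

Lemma sh_up s : sh (up s) = s.
Proof.
apply: val_inj => /=; rewrite modnDml -addnA subnKC // modnDr modn_small //.
Qed.

Lemma up_inj : injective up.
Proof. by move=> a b e; rewrite -(sh_up a) e sh_up. Qed.

Variable R : comNzRingType.

Lemma penc_shift (H : 'I_N -> R) :
  mdvd ('X^N - 1) ('X^M * penc H - penc (fun s => H (sh s))).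
Proof.
have E1 : 'X^M * penc H = \sum_(t < N) H t *: 'X^(t + M).
  rewrite /penc mulr_sumr; apply: eq_bigr => t _.
  by rewrite -scalerAr -exprD addnC.
have E2 : penc (fun s => H (sh s)) = \sum_(t < N) H t *: 'X^((t + M) %% N).
  by rewrite /penc (reindex_inj up_inj); apply: eq_bigr => t _; rewrite sh_up.
rewrite E1 E2 -sumrB; apply: mdvd_sum => t.
by rewrite -scalerBr; apply: mdvdZ; apply: Xmod.
Qed.

End Shift.

Definition zdvd (c : int) (P : {poly int}) := forall i, (c %| P`_i)%Z.

Lemma zdvdZ c Q : zdvd c (c *: Q).
Proof. by move=> i; rewrite coefZ dvdz_mulr. Qed.

Lemma zdvdP c P : zdvd c P -> P = c *: \poly_(i < size P) (P`_i %/ c)%Z.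
Proof.
move=> h; apply/polyP => i; rewrite coefZ coef_poly.
case: ltnP => hi; first by rewrite mulrC divzK.
by rewrite mulr0 nth_default.
Qed.

Lemma dvdz_big (c : int) (n : nat) (F : 'I_n -> int) :
  (forall i, (c %| F i)%Z) -> (c %| \sum_(i < n) F i)%Z.
Proof. by move=> h; apply: rpred_sum => i _. Qed.

Lemma zdvd_cancel (d Q : {poly int}) c : d \is monic -> zdvd c (d * Q) -> zdvd c Q.
Proof.
move=> md hdQ.
have key : forall k i, (size Q - k <= i)%N -> (c %| Q`_i)%Z.
  elim=> [|k IH] i hi.
    by rewrite subn0 in hi; rewrite nth_default.
  case: (leqP (size Q - k) i) => hik; first exact: IH.
  have ei : i = (size Q - k).-1 by lia.
  pose D := (size d).-1.
  have := hdQ (i + D)%N; rewrite coefM.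
  have hD : (D < (i + D).+1)%N by lia.
  rewrite (bigD1 (Ordinal hD)) //= addnK.
  have -> : d`_D = 1 by move/monicP: md; rewrite lead_coefE.
  rewrite mul1r => h.
  have hr : (c %| \sum_(j < (i + D).+1 | j != Ordinal hD) d`_j * Q`_(i + D - j))%Z.
    apply: rpred_sum => j hj.
    case: (ltnP j D) => hjD.
      apply: dvdz_mull; apply: IH; lia.
    rewrite [d`_j]nth_default ?mul0r ?dvdz0 //; move: hj hjD; rewrite -val_eqE /= /D; case: j => jj /= _; lia.
  by rewrite -(rpredDr _ hr).
by move=> i; apply: (key (size Q)); lia.
Qed.

Section Eisen.
Variable p : nat.
Hypothesis pr : prime p.
Local Notation pi := (intr : int -> 'F_p).

Lemma dvdpE (z : int) : (p%:Z %| z)%Z = (pi z == 0).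
Proof. exact: (dvdz_pcharf (pchar_Fp pr)). Qed.

Lemma pi_p : pi p%:Z = 0.
Proof. by apply/eqP; rewrite -dvdpE dvdzz. Qed.

Definition pip (P : {poly int}) : {poly 'F_p} := map_poly pi P.
Lemma pipM P Q : pip (P * Q) = pip P * pip Q. Proof. exact: rmorphM. Qed.
Lemma pipD P Q : pip (P + Q) = pip P + pip Q. Proof. exact: rmorphD. Qed.
Lemma pipB P Q : pip (P - Q) = pip P - pip Q. Proof. exact: rmorphB. Qed.
Lemma pipZ c P : pip (c *: P) = pi c *: pip P. Proof. exact: map_polyZ. Qed.
Lemma pipXn k : pip 'X^k = 'X^k. Proof. exact: map_polyXn. Qed.
Lemma pipX : pip 'X = 'X. Proof. exact: map_polyX. Qed.
Lemma pip1 : pip 1 = 1. Proof. exact: rmorph1. Qed.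
Lemma coef_pip P i : (pip P)`_i = pi P`_i. Proof. exact: coef_map. Qed.

Lemma eisen (e l : nat) (f r a nu b : {poly int}) :
  (l < e)%N ->
  (forall i, (i < l)%N -> (p%:Z %| f`_i)%Z) -> ~~ (p%:Z %| f`_l)%Z ->
  pip nu = 'X^e -> nu`_0 = p%:Z ->
  (forall i, (e <= i)%N -> r`_i = 0) ->
  f * r = (p%:Z ^+ 2) *: a + nu * b ->
  forall i, (p%:Z %| r`_i)%Z.
Proof.
move=> le hf hfl hnu hnu0 hr E i0; apply/negPn/negP => hi0.
have ex : exists i, ~~ (p%:Z %| r`_i)%Z by exists i0.
case: (ex_minnP ex) => j hj jmin.
have je : (j < e)%N.
  rewrite ltnNge; apply/negP => ej; move: hj; by rewrite hr // dvdz0.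
have Em : pip f * pip r = 'X^e * pip b.
  have := congr1 pip E.
  by rewrite pipM pipD pipZ pipM hnu rmorphXn /= pi_p expr0n /= scale0r add0r.
have Fi : forall i, (i < l)%N -> (pip f)`_i = 0.
  by move=> i hi; rewrite coef_pip /=; apply/eqP; rewrite -dvdpE hf.
have Fl : (pip f)`_l != 0 by rewrite coef_pip /= -dvdpE.
have Ri : forall i, (i < j)%N -> (pip r)`_i = 0.
  move=> i hi; rewrite coef_pip /=; apply/eqP; rewrite -dvdpE.
  by apply/negPn/negP => /jmin; rewrite leqNgt hi.
have Rj : (pip r)`_j != 0 by rewrite coef_pip /= -dvdpE.
have CP : forall m, (m <= l + j)%N ->
    (pip f * pip r)`_m =
    if m == (l + j)%N then (pip f)`_l * (pip r)`_j else 0.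
  move=> m hm; rewrite coefM.
  case: eqP => hmlj.
    have hl : (l < m.+1)%N by lia.
    rewrite (bigD1 (Ordinal hl)) //= big1 ?addr0; first by rewrite hmlj addKn.
    move=> k /eqP hk; have hk' : k <> l :> nat by move=> e'; apply: hk; apply: val_inj.
    case: (ltnP k l) => hkl; first by rewrite Fi ?mul0r.
    by rewrite Ri ?mulr0 //; have := ltn_ord k; lia.
  rewrite big1 // => k _.
  case: (ltnP k l) => hkl; first by rewrite Fi ?mul0r.
  by rewrite Ri ?mulr0 //; have := ltn_ord k; lia.
have hlj : (e <= l + j)%N.
  rewrite leqNgt; apply/negP => hlt.
  have := congr1 (fun P : {poly 'F_p} => P`_(l + j)%N) Em; rewrite CP // eqxx coefXnM hlt.
  by move/eqP; rewrite mulf_eq0 (negbTE Fl) (negbTE Rj).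
have [d dE] : exists d, d = (l + j - e)%N by eexists.
have Bk : forall k, (k < d)%N -> (p%:Z %| b`_k)%Z.
  move=> k hk; rewrite dvdpE -coef_pip.
  have := congr1 (fun P : {poly 'F_p} => P`_(k + e)%N) Em; rewrite CP; last by lia.
  rewrite coefXnM ifN; last by lia.
  by rewrite ltnNge leq_addl /= addnK => <-; rewrite eqxx.
have Bd : ~~ (p%:Z %| b`_d)%Z.
  rewrite dvdpE -coef_pip.
  have := congr1 (fun P : {poly 'F_p} => P`_(l + j)%N) Em; rewrite CP // eqxx coefXnM ltnNge hlj /=.
  by rewrite dE => <-; rewrite mulf_eq0 (negbTE Fl) (negbTE Rj).
have := congr1 (fun P : {poly int} => P`_d) E => /=.
rewrite coefD coefZ !coefM.
have LHS : (p%:Z ^+ 2 %| \sum_(k < d.+1) f`_k * r`_(d - k))%Z.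
  apply: rpred_sum => k _; rewrite expr2; apply: dvdz_mul.
    apply: hf; case: k => k /= hk; move: hk dE je hlj; clear; lia.
  apply/negPn/negP => /jmin; case: k => k /= hk; move: hk dE le hlj; clear; lia.
have h0 : (0 < d.+1)%N by [].
rewrite [\sum_(k < d.+1) nu`_k * _](bigD1 (Ordinal h0)) //= subn0 hnu0.
have RHS : (p%:Z ^+ 2 %| \sum_(k < d.+1 | k != Ordinal h0) nu`_k * b`_(d - k))%Z.
  apply: rpred_sum => k hk; rewrite expr2; apply: dvdz_mul.
    have hk0 : (0 < k)%N by case: k hk => [[|k]] //=.
    rewrite dvdpE -coef_pip hnu coefXn (_ : (k == e :> nat) = false) //.
    by apply/negbTE/eqP; case: k hk hk0 => k /= hk _ hk0; move: hk hk0 dE le je; clear; lia.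
  apply: Bk; case: k hk => [[|k]] //= hk _; move: hk; clear; lia.
move=> E2; move: LHS; rewrite E2 addrA (rpredDr _ RHS) (rpredDl _ (dvdz_mulr _ (dvdzz _))).
rewrite expr2 dvdz_mul2l; first by apply/negP.
by rewrite eqz_nat -lt0n prime_gt0.
Qed.

End Eisen.

Section Nu.
Variable p : nat.
Hypothesis pr : prime p.
Variable k : nat.
Local Notation M := (p ^ k)%N.
Local Notation N := (p ^ k.+1)%N.
Local Notation e := (p ^ k.+1 - p ^ k)%N.
Local Notation pip := (pip p).

Definition Tc (R : nzRingType) (P : {poly R}) := P \Po ('X + 1).

Lemma Tc_inv (R : comNzRingType) (P : {poly R}) : Tc P \Po ('X - 1) = P.
Proof.
by rewrite /Tc -comp_polyA comp_polyD comp_polyX comp_polyC subrK comp_polyXr.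
Qed.

Lemma TcM (R : comNzRingType) (P Q : {poly R}) : Tc (P * Q) = Tc P * Tc Q.
Proof. exact: comp_polyM. Qed.
Lemma TcD (R : comNzRingType) (P Q : {poly R}) : Tc (P + Q) = Tc P + Tc Q.
Proof. exact: comp_polyD. Qed.
Lemma TcB (R : comNzRingType) (P Q : {poly R}) : Tc (P - Q) = Tc P - Tc Q.
Proof. exact: comp_polyB. Qed.

Lemma pip_Tc P : pip (Tc P) = Tc (pip P).
Proof. by rewrite /Tc /pip map_comp_poly /= rmorphD /= map_polyX rmorph1. Qed.

Lemma frob j : (('X + 1 : {poly 'F_p}) ^+ (p ^ j)) = 'X^(p ^ j) + 1.
Proof.
elim: j => [|j IH]; first by rewrite expn0 !expr1.
have hc : [pchar {poly 'F_p}].-nat p by rewrite pnatE // pchar_poly pchar_Fp.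
by rewrite expnSr !exprM IH exprDn_pchar // expr1n.
Qed.

Lemma TcXn1 j : Tc ('X^(p ^ j) - 1 : {poly 'F_p}) = 'X^(p ^ j).
Proof.
rewrite /Tc comp_polyB -[1]polyC1 comp_polyC.
by rewrite rmorphXn /= comp_polyX frob addrK.
Qed.

Definition D : {poly int} := 'X^M - 1.
Definition nuP : {poly int} := \sum_(i < p) ('X^M) ^+ i.
Definition w : {poly int} := 'X^N - 1.

Lemma p_gt0 : (0 < p)%N. Proof. exact: prime_gt0. Qed.
Lemma M_gt0 : (0 < M)%N. Proof. by rewrite expn_gt0 p_gt0. Qed.
Lemma N_gt0 : (0 < N)%N. Proof. by rewrite expn_gt0 p_gt0. Qed.
Lemma NM : N = (M * p)%N. Proof. by rewrite expnSr. Qed.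
Lemma Ne : N = (M + e)%N.
Proof. rewrite subnKC // NM; apply: leq_pmulr; exact: p_gt0. Qed.

Lemma wE : w = D * nuP.
Proof. by rewrite /w /D /nuP NM exprM subrX1. Qed.

Lemma monD : D \is monic.
Proof. by rewrite /D -[1]polyC1 monicXnsubC // M_gt0. Qed.
Lemma monw : w \is monic.
Proof. by rewrite /w -[1]polyC1 monicXnsubC // N_gt0. Qed.
Lemma monnu : nuP \is monic.
Proof. by rewrite -(monicMl _ monD) -wE monw. Qed.

Lemma size_nu : size nuP = e.+1.
Proof.
have := congr1 (fun P : {poly int} => size P) wE; rewrite size_mul ?monic_neq0 ?monD ?monnu //.
rewrite /w /D !size_Xn_sub_1 ?M_gt0 ?N_gt0 // addSn /=; move: (size nuP) => s h; have := Ne; move: h; move: (p ^ k.+1)%N (p ^ k)%N => a b; lia.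
Qed.

Lemma nuT_map : pip (Tc nuP) = 'X^e.
Proof.
apply: (@mulfI _ ('X^M)); first by rewrite expf_neq0 // polyX_eq0.
rewrite -exprD -Ne pip_Tc.
have := congr1 (fun P => Tc (pip P)) wE; rewrite /= /pip rmorphM /= TcM.
rewrite /w /D rmorphB /= map_polyXn rmorph1 TcXn1.
rewrite rmorphB /= map_polyXn rmorph1 TcXn1 => ->.
by [].
Qed.

Lemma nuT0 : (Tc nuP)`_0 = p%:Z.
Proof.
rewrite -horner_coef0 /Tc horner_comp hornerD hornerX hornerC add0r.
rewrite /nuP horner_sum.
under eq_bigr do rewrite -exprM hornerXn expr1n.
by rewrite sumr_const card_ord natz.
Qed.

End Nu.

Section LemAB.
Variable p : nat.
Hypothesis pr : prime p.
Variable k : nat.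
Local Notation M := (p ^ k)%N.
Local Notation N := (p ^ k.+1)%N.
Local Notation e := (p ^ k.+1 - p ^ k)%N.
Local Notation D := (D p k).
Local Notation nuP := (nuP p k).
Local Notation w := (w p k).

Definition cP : {poly int} := (p%:Z)%:P.

Definition inI (c P : {poly int}) := exists A B, P = c * A + w * B.

Lemma cPX j : cP ^+ j = (p%:Z ^+ j)%:P.
Proof. by rewrite /cP rmorphXn. Qed.

Lemma zdvd_cP j P : zdvd (p%:Z ^+ j) P -> exists Q, P = cP ^+ j * Q.
Proof. by move=> /zdvdP ->; eexists; rewrite cPX mul_polyC. Qed.

Lemma cP_zdvd j Q : zdvd (p%:Z ^+ j) (cP ^+ j * Q).
Proof. by rewrite cPX mul_polyC; apply: zdvdZ. Qed.

Lemma cP_neq0 j : cP ^+ j != 0.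
Proof.
by rewrite expf_neq0 // /cP polyC_eq0 eqz_nat -lt0n prime_gt0.
Qed.

Lemma cP_cancel j X Y : cP ^+ j * X = cP ^+ j * Y -> X = Y.
Proof. by move=> h; apply: (mulfI (cP_neq0 j)). Qed.

Lemma Tc_cP j X : Tc (cP ^+ j * X) = cP ^+ j * Tc X.
Proof. by rewrite TcM cPX /Tc comp_polyC. Qed.

Variables (F : {poly int}) (l : nat).
Hypothesis hF : forall i, (i < l)%N -> (p%:Z %| (Tc F)`_i)%Z.
Hypothesis hFl : ~~ (p%:Z %| (Tc F)`_l)%Z.
Hypothesis hl : (l < M)%N.

Lemma le_e : (l < e)%N.
Proof.
have p2 : (2 <= p)%N by apply: prime_gt1.
rewrite expnSr; apply: (leq_trans hl).
move: M_gt0 => /(_ p pr k); move: (p ^ k)%N => a a0.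
nia.
Qed.

Lemma lemA Q : inI (cP ^+ 2) (F * D * Q) -> inI cP (D * Q).
Proof.
move=> [A [B E]].
have E1 : D * (F * Q - nuP * B) = cP ^+ 2 * A.
  have -> : D * (F * Q - nuP * B) = F * D * Q - (D * nuP) * B by ring.
  by rewrite E -wE addrK.
have := zdvd_cancel (monD pr k) (eq_ind_r (zdvd _) (cP_zdvd 2 A) E1).
move=> /zdvd_cP [A' E2].
have EQ := Pdiv.RingMonic.rdivp_eq (monnu pr k) Q.
set S := Pdiv.CommonRing.rdivp Q nuP in EQ.
set R := Pdiv.CommonRing.rmodp Q nuP in EQ.
have sR : (size R <= e)%N.
  by rewrite -ltnS -(size_nu pr k) Pdiv.Ring.ltn_rmodpN0 // monic_neq0 // monnu.
have ER : F * R = cP ^+ 2 * A' + nuP * (B - F * S).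
  have -> : F * R = (F * Q - nuP * B) + nuP * (B - F * S) - (F * (Q - (S * nuP + R))).
    by ring.
  by rewrite E2 -EQ subrr mulr0 subr0.
have := congr1 (@Tc _) ER; rewrite TcM TcD Tc_cP TcM cPX mul_polyC => ET.
have hr : forall i, (e <= i)%N -> (Tc R)`_i = 0.
  move=> i hi; rewrite nth_default // /Tc size_comp_poly2 ?(leq_trans sR) //.
  by rewrite -polyC1 size_XaddC.
have := eisen pr le_e hF hFl (nuT_map pr k) (nuT0 p k) hr ET.
move=> /(zdvd_cP (j := 1)) [S' ES'].
exists (D * (S' \Po ('X - 1))), S.
rewrite {1}EQ -(Tc_inv R) ES' comp_polyM expr1 /cP comp_polyC wE; ring.
Qed.

Lemma lemB j G : inI (cP ^+ j.+1) (F * D * G) -> inI (cP ^+ j) (D * G).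
Proof.
elim: j G => [|j IH] G.
  by move=> _; exists (D * G), 0; rewrite expr0 mul1r mulr0 addr0.
move=> [A [B E]].
have [A1 [B1 E1]] : inI (cP ^+ j) (D * G).
  apply: IH; exists (cP * A), B; rewrite E exprS; ring.
have E1' : D * (G - nuP * B1) = cP ^+ j * A1 by rewrite mulrBr mulrA -wE E1 addrK.
have := zdvd_cancel (monD pr k) (eq_ind_r (zdvd _) (cP_zdvd j A1) E1').
move=> /zdvd_cP [Q EQ].
have EC : w * (B - F * B1) = cP ^+ j * (F * D * Q - cP ^+ 2 * A).
  have -> : w * (B - F * B1) = (cP ^+ j.+2 * A + w * B) - cP ^+ j.+2 * A - F * (w * B1) by ring.
  rewrite -E wE (_ : G = nuP * B1 + cP ^+ j * Q); last by rewrite -EQ addrC subrK.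
  rewrite !exprS; ring.
have := zdvd_cancel (monw pr k) (eq_ind_r (zdvd _) (cP_zdvd j _) EC).
move=> /zdvd_cP [C EC2].
have EF : F * D * Q = cP ^+ 2 * A + w * C.
  apply: (@cP_cancel j).
  have -> : cP ^+ j * (cP ^+ 2 * A + w * C) = cP ^+ j * (cP ^+ 2 * A) + w * (cP ^+ j * C) by ring.
  rewrite -EC2 EC; ring.
have [A2 [B2 E2]] := lemA (ex_intro _ A (ex_intro _ C EF)).
exists A2, (B1 + cP ^+ j * B2).
rewrite (_ : G = nuP * B1 + cP ^+ j * Q); last by rewrite -EQ addrC subrK.
rewrite mulrDr (mulrA D) -wE mulrCA E2 exprS; ring.
Qed.

End LemAB.

Section Ipow.
Variable p : nat.
Hypothesis pr : prime p.
Variable n : nat.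
Local Notation N := (p ^ n)%N.
Local Notation Fp := ('F_p).

Definition lowzero (R : nzRingType) k (P : {poly R}) := forall i, (i < k)%N -> P`_i = 0.

Lemma lowzeroM (R : comNzRingType) a b (P Q : {poly R}) :
  lowzero a P -> lowzero b Q -> lowzero (a + b) (P * Q).
Proof.
move=> hP hQ i hi; rewrite coefM big1 // => j _.
case: (ltnP j a) => hj; first by rewrite hP ?mul0r.
by rewrite hQ ?mulr0 //; have := ltn_ord j; lia.
Qed.

Lemma lowzeroD (R : nzRingType) k (P Q : {poly R}) :
  lowzero k P -> lowzero k Q -> lowzero k (P + Q).
Proof. by move=> hP hQ i hi; rewrite coefD hP ?hQ ?addr0. Qed.

Lemma lowzeroB (R : nzRingType) k (P Q : {poly R}) :
  lowzero k P -> lowzero k Q -> lowzero k (P - Q).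
Proof. by move=> hP hQ i hi; rewrite coefB hP ?hQ ?subr0. Qed.

Lemma lowzero_le (R : nzRingType) a b (P : {poly R}) :
  (b <= a)%N -> lowzero a P -> lowzero b P.
Proof. by move=> hb hP i hi; apply: hP; lia. Qed.

Lemma Tc0 (R : comNzRingType) (P : {poly R}) : (Tc P)`_0 = P.[1].
Proof. by rewrite -horner_coef0 /Tc horner_comp hornerD hornerX hornerC add0r. Qed.

Lemma penc1 (x : 'I_N -> Fp) : (penc x).[1] = \sum_t x t.
Proof.
rewrite /penc horner_sum; apply: eq_bigr => t _.
by rewrite hornerZ hornerXn expr1n mulr1.
Qed.

Lemma N_gt0' : (0 < N)%N. Proof. by rewrite expn_gt0 prime_gt0. Qed.

Lemma penc_fmul (x y : FG p n) :
  mdvd ('X^N - 1) (penc x * penc y - penc (fmul x y)).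
Proof.
have -> : penc (fmul x y) = penc (conv x y).
  by apply: eq_bigr => t _; rewrite /fmul ffunE.
exact: penc_conv N_gt0'.
Qed.

Lemma TcwFp : Tc ('X^N - 1 : {poly Fp}) = 'X^N.
Proof. exact: TcXn1. Qed.

Lemma low_mdvd k (Q : {poly Fp}) : (k <= N)%N -> mdvd ('X^N - 1) Q -> lowzero k (Tc Q).
Proof.
move=> hk [A ->]; rewrite /Tc comp_polyM -/(Tc _) TcwFp.
by move=> i hi; rewrite coefXnM ifT //; lia.
Qed.

Lemma ipow_low k (x : FG p n) : (k <= N)%N -> ipow k x -> lowzero k (Tc (penc x)).
Proof.
elim: k x => [|k IH] x hk; first by move=> _ i.
move=> [s [hs ->]].
have -> : penc (\sum_(ab <- s) fmul ab.1 ab.2) = \sum_(ab <- s) penc (fmul ab.1 ab.2).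
  rewrite -penc_sum; apply: eq_bigr => t _; by rewrite sum_ffunE.
elim: s hs => [|ab s IHs] hs.
  by rewrite big_nil /Tc comp_poly0 => i _; rewrite coef0.
rewrite big_cons TcD; apply: lowzeroD; last first.
  by apply: IHs => ab' h; apply: hs; rewrite in_cons h orbT.
have [ha hb] := hs ab (mem_head _ _).
have [Q EQ] := penc_fmul ab.1 ab.2.
have -> : penc (fmul ab.1 ab.2) = penc ab.1 * penc ab.2 - ('X^N - 1) * Q.
  by rewrite -EQ opprB addrC subrK.
rewrite TcB TcM; apply: lowzeroB; last by apply: low_mdvd => //; exists Q.
rewrite -add1n; apply: lowzeroM; last exact: IH (ltnW hk) hb.
by move=> i; rewrite ltnS leqn0 => /eqP ->; rewrite Tc0 penc1; apply/eqP.
Qed.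


Lemma low_ipow k (x : FG p n) : (2 <= N)%N -> (k <= N)%N ->
  lowzero k (Tc (penc x)) -> ipow k x.
Proof.
move=> N2; elim: k x => [|k IH] x hk hlow //=.
set P := penc x.
have sP : (size P <= N)%N by apply: size_penc.
pose S := \poly_(i < N) (Tc P)`_(i.+1).
have ETP : Tc P = 'X * S.
  apply/polyP => i; rewrite coefXM; case: i => [|i] /=; first by rewrite hlow.
  rewrite coef_poly; case: ltnP => // hi.
  rewrite nth_default // /Tc size_comp_poly2; first exact: (leq_trans sP (leq_trans hi (leqnSn _))).
  by rewrite -polyC1 size_XaddC.
pose a : FG p n := [ffun t : 'I_N => ('X - 1 : {poly Fp})`_t].
pose b : FG p n := [ffun t : 'I_N => (S \Po ('X - 1))`_t].
have pa : penc a = 'X - 1.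
  rewrite -[RHS](penc_coef (N := N)); first by apply: eq_bigr => t _; rewrite ffunE.
  by rewrite -polyC1 size_XsubC.
have pb : penc b = S \Po ('X - 1).
  rewrite -[RHS](penc_coef (N := N)); first by apply: eq_bigr => t _; rewrite ffunE.
  by rewrite /Tc size_comp_poly2 ?size_poly // -polyC1 size_XsubC.
have Eab : penc a * penc b = P.
  by rewrite pa pb -[RHS]Tc_inv ETP comp_polyM comp_polyX.

have [Q EQ] := penc_fmul a b.
have Q0 : Q = 0.
  apply/eqP; apply/negPn/negP => hQ.
  have : (size (('X^N - 1) * Q)%R <= N)%N.
    rewrite -EQ Eab; apply: leq_trans (size_add _ _) _.
    by rewrite geq_max size_opp sP size_penc.
  rewrite size_mul ?hQ // ?size_Xn_sub_1 ?N_gt0' //; last first.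
    by rewrite -size_poly_eq0 size_Xn_sub_1 ?N_gt0'.
  by move: hQ; rewrite -size_poly_eq0; move: (size Q) N => q m; lia.
have Eab' : penc (fmul a b) = P.
  by apply/eqP; rewrite -Eab -subr_eq0 -opprB oppr_eq0 EQ Q0 mulr0.

have fx : fmul a b = x by apply/ffunP => t; apply: (penc_inj Eab').
exists [:: (a, b)]; split; last by rewrite big_seq1.
move=> ab; rewrite mem_seq1 => /eqP -> /=; split.
  by rewrite /aug -penc1 pa hornerD hornerX hornerN hornerC subrr.
apply: IH; first exact: ltnW.
rewrite pb /Tc -comp_polyA comp_polyB comp_polyX comp_polyC addrK comp_polyXr.
move=> i hi; rewrite coef_poly ifT; first by apply: hlow.
exact: (leq_trans hi (ltnW hk)).
Qed.

End Ipow.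

Local Close Scope ring_scope.

Section Zp.
Variable p : nat.
Hypothesis p0 : 0 < p.

Lemma zcoh (x : Defs.Zp p) k : sval x k.+1 %% p ^ k = sval x k.
Proof. exact: (proj1 (proj2_sig x k)). Qed.

Lemma zsmall (x : Defs.Zp p) k : sval x k %% p ^ k = sval x k.
Proof. exact: (proj2 (proj2_sig x k)). Qed.

Lemma zred (x : Defs.Zp p) k j : k <= j -> sval x j %% p ^ k = sval x k.
Proof.
elim: j => [|j IH]; first by rewrite leqn0 => /eqP ->; apply: zsmall.
rewrite leq_eqVlt => /orP [/eqP -> | hk]; first exact: zsmall.
by rewrite -(modn_dvdm _ (dvdn_exp2l p (hk : k <= j))) zcoh IH.
Qed.

Lemma zext (x y : Defs.Zp p) : (forall k, sval x k = sval y k) -> x = y.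
Proof.
case: x y => [x hx] [y hy] /= h.
have e : x = y by apply: functional_extensionality.
subst y; f_equal; apply: proof_irrelevance.
Qed.

Lemma zbig (I : Type) (r : seq I) (P : pred I) (F : I -> Defs.Zp p) (F2 : I -> nat) k :
  (forall i, sval (F i) k = F2 i %% p ^ k) ->
  sval (\big[@zp_add p/zp0 p]_(i <- r | P i) F i) k = (\sum_(i <- r | P i) F2 i) %% p ^ k.
Proof.
move=> h.
apply: (big_ind2 (fun (x : Defs.Zp p) (m : nat) => sval x k = m %% p ^ k)).
- by rewrite /= mod0n.
- by move=> x1 m1 x2 m2 e1 e2 /=; rewrite e1 e2 modnDm.
- by move=> i _; apply: h.
Qed.

Lemma zadd0 (x : Defs.Zp p) : zp_add x (zp0 p) = x.
Proof. by apply: zext => k /=; rewrite mod0n addn0 zsmall. Qed.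

End Zp.

Local Open Scope ring_scope.

Lemma Posz_sum (I : Type) (r : seq I) (P : pred I) (F : I -> nat) :
  ((\sum_(i <- r | P i) F i)%N)%:Z = \sum_(i <- r | P i) (F i)%:Z.
Proof. by rewrite (big_morph Posz PoszD (erefl (Posz 0))). Qed.

Lemma PoszX (p j : nat) : ((p ^ j)%N : int) = p%:Z ^+ j.
Proof. by rewrite -!natz natrX. Qed.

Lemma dvdz_modn (a b m : nat) :
  ((m%:Z %| a%:Z - b%:Z)%Z) = ((a %% m)%N == (b %% m)%N).
Proof. by rewrite -eqz_mod_dvd /= !modz_nat eqz_nat. Qed.

Section Main.
Variable p : nat.
Hypothesis pr : prime p.
Variable k : nat.
Local Notation M := (p ^ k)%N.
Local Notation N := (p ^ k.+1)%N.
Variables f g : Lam p k.+1.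
Hypothesis Hnu : im_nu (lmul f g).
Variable l : nat.
Hypothesis hl : (l < M)%N.
Hypothesis hlow : lowzero l (Tc (penc (red f))).
Hypothesis hlam : (Tc (penc (red f)))`_l != 0.

Let p0 : (0 < p)%N := prime_gt0 pr.
Let N0 : (0 < N)%N := N_gt0 pr k.
Let M0 : (0 < M)%N := M_gt0 pr k.
Lemma MN : (M <= N)%N.
Proof. by rewrite expnS leq_pmull. Qed.

Local Notation sh := (sh M N0).

Lemma shM (s : 'I_N) : (sh s %% M = s %% M)%N.
Proof.
rewrite /= modn_dvdm ?dvdn_exp2l // -modnDmr.
have -> : ((N - M) %% M = 0)%N.
  by apply/eqP; rewrite -/(dvdn _ _) dvdn_sub ?dvdn_exp2l.
by rewrite addn0.
Qed.

Definition lev (x : Lam p k.+1) (K : nat) : 'I_N -> int := fun t => (sval (x t) K)%:Z.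

Definition Cn (c : 'I_N) (K : nat) : nat :=
  (\sum_(a < N) \sum_(b < N | ((a + b) %% N)%N == c) sval (f a) K * sval (g b) K)%N.

Lemma lmul_sval c K : sval (lmul f g c) K = (Cn c K %% p ^ K)%N.
Proof.
apply: zbig => a; apply: zbig => b //.
Qed.

Lemma lmul_sh s : lmul f g (sh s) = lmul f g s.
Proof.
case: Hnu => h Eh; rewrite !Eh /Defs.nu; apply: eq_bigl => s'.
by rewrite /= shM.
Qed.

Lemma Cn_sh s K : (Cn (sh s) K %% p ^ K = Cn s K %% p ^ K)%N.
Proof. by rewrite -!lmul_sval lmul_sh. Qed.

Lemma conv_lev c K : conv (lev f K) (lev g K) c = (Cn c K)%:Z.
Proof.
rewrite /conv /Cn Posz_sum; apply: eq_bigr => a _.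
by rewrite Posz_sum; apply: eq_bigr => b _.
Qed.

Lemma small_inI j (P : {poly int}) : (size P <= N)%N -> inI p k (cP p ^+ j) P -> zdvd (p%:Z ^+ j) P.
Proof.
move=> sP [A [B E]].
have EA := Pdiv.RingMonic.rdivp_eq (monw pr k) A.
set A1 := Pdiv.CommonRing.rdivp A (w p k) in EA.
set A2 := Pdiv.CommonRing.rmodp A (w p k) in EA.
have sA2 : (size A2 <= N)%N.
  by rewrite -ltnS -(@size_Xn_sub_1 int _ N0) Pdiv.Ring.ltn_rmodpN0 // monic_neq0 // monw.
have E2 : P - cP p ^+ j * A2 = w p k * (cP p ^+ j * A1 + B).
  by rewrite E {1}EA; ring.
suff -> : P = cP p ^+ j * A2 by apply: cP_zdvd.
apply/eqP; rewrite -subr_eq0 E2; apply/eqP.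
apply/eqP; apply/negPn/negP => hX.
have : (size (w p k * (cP p ^+ j * A1 + B))%R <= N)%N.
  rewrite -E2; apply: leq_trans (size_add _ _) _; rewrite geq_max size_opp sP /=.
  apply: leq_trans (size_mul_leq _ _) _.
  rewrite cPX size_polyC; move: sA2; case: (_ != 0); move: (size A2) N => a m /=; lia.
have hX2 : cP p ^+ j * A1 + B != 0 by apply: contraNneq hX => ->; rewrite mulr0.
rewrite size_mul ?hX2 ?monic_neq0 ?monw // /w (@size_Xn_sub_1 int _ N0).
by move: hX2; rewrite -size_poly_eq0; move: (size _) N => q m; lia.
Qed.

Lemma pip_lev K : (0 < K)%N -> pip p (penc (lev f K)) = penc (red f).
Proof.
move=> K0; apply/polyP => i; rewrite coef_pip.
case: (ltnP i N) => hi.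
  rewrite (coef_penc_ord _ (Ordinal hi)) (coef_penc_ord _ (Ordinal hi)) /lev /red ffunE.
  by rewrite -(zred _ K0) expn1 (Fp_nat_mod pr).
by rewrite !coef_penc_ge.
Qed.

Lemma hF K : (0 < K)%N -> forall i, (i < l)%N -> (p%:Z %| (Tc (penc (lev f K)))`_i)%Z.
Proof.
move=> K0 i hi; rewrite dvdpE // -coef_pip pip_Tc pip_lev //.
by apply/eqP; apply: hlow.
Qed.

Lemma hFl K : (0 < K)%N -> ~~ (p%:Z %| (Tc (penc (lev f K)))`_l)%Z.
Proof. by move=> K0; rewrite dvdpE // -coef_pip pip_Tc pip_lev. Qed.

Lemma level j : inI p k (cP p ^+ j.+1) (penc (lev f j.+1) * D p k * penc (lev g j.+1)).
Proof.
set K := j.+1.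
set F := penc (lev f K); set G := penc (lev g K).
pose C := conv (lev f K) (lev g K).
have [Q1 EQ1] := penc_shift N0 MN C.
have [Q2 EQ2] := penc_conv (lev f K) (lev g K) N0.
have hZ : zdvd (p%:Z ^+ K) (penc (fun t => C (sh t) - C t)).
  move=> i; case: (ltnP i N) => hi; last by rewrite coef_penc_ge ?dvdz0.
  rewrite (coef_penc_ord _ (Ordinal hi)) /C !conv_lev -PoszX dvdz_modn.
  by rewrite Cn_sh.
have [Z EZ] := zdvd_cP hZ.
exists Z, (Q1 + D p k * Q2).
have E3 : penc (fun t => C (sh t) - C t) = penc (fun t => C (sh t)) - penc C.
  by rewrite pencD pencN.
have E4 : F * G = penc C + w p k * Q2 by rewrite -EQ2 addrC subrK.
have E5 : 'X^M * penc C = penc (fun t => C (sh t)) + w p k * Q1 by rewrite -EQ1 addrC subrK.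
rewrite (mulrC F) -mulrA E4 /D mulrDr mulrBl mul1r E5 -[cP p ^+ K * Z]EZ E3 /w; ring.
Qed.

Lemma g_sh s : g (sh s) = g s.
Proof.
apply: zext => j.
have := lemB pr (hF (ltn0Sn j)) (hFl (ltn0Sn j)) hl (level j).
case=> A [B E].
pose G := lev g j.+1.
have [Q1 EQ1] := penc_shift N0 MN G.
have hP : inI p k (cP p ^+ j) (penc (fun t => G (sh t) - G t)).
  exists A, (B - Q1).
  have -> : penc (fun t => G (sh t) - G t) = penc (fun t => G (sh t)) - penc G by rewrite pencD pencN.
  rewrite (_ : penc (fun t => G (sh t)) = 'X^M * penc G - w p k * Q1); last by rewrite -EQ1 opprB addrC subrK.
  move: E; rewrite /D => E.
  have -> : 'X^M * penc G - w p k * Q1 - penc G = ('X^M - 1) * penc G - w p k * Q1 by ring.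
  by rewrite E; ring.
have := small_inI (size_penc _) hP (val s).
rewrite (coef_penc_ord _ s) /G /lev -PoszX dvdz_modn => /eqP.
by rewrite !zred.
Qed.

Lemma g_mod (t : 'I_N) : g t = g (widen_ord MN (Ordinal (ltn_pmod t M0))).
Proof.
have : forall m (t : 'I_N), (t < m)%N -> g t = g (widen_ord MN (Ordinal (ltn_pmod t M0))).
  elim=> [|m IH] t' //.
  case: (ltnP t' M) => htM ht.
    by congr g; apply: val_inj => /=; rewrite modn_small.
  have vsh : val (sh t') = (t' - M)%N.
    rewrite /=.
    have -> : (t' + (N - M) = (t' - M) + N)%N.
      have := MN; move: (nat_of_ord t') htM => a ha.
      move: (p ^ k.+1)%N (p ^ k)%N ha => b c; lia.
    rewrite modnDr modn_small //.
    by apply: leq_ltn_trans (leq_subr _ _) (ltn_ord t').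
  rewrite -g_sh IH; last by rewrite vsh; move: ht htM M0; move: (val t') M => a b; lia.
  by congr g; apply: val_inj => /=; rewrite shM.
by move=> h; apply: h (ltnSn t).
Qed.

Lemma g_im : im_nu g.
Proof.
exists (fun s => g (widen_ord MN s)) => t.
rewrite /Defs.nu /= (@big_pred1_id _ (@zp_add p) (zp0 p) _ (Ordinal (ltn_pmod t M0))); last first.
  by move=> s; rewrite /= /pred1 /= -val_eqE /= eq_sym.
by rewrite zadd0 // g_mod.
Qed.

End Main.

End Aux.
Import Aux.

Unset Implicit Arguments.

Theorem lemma4p10 (p n : nat) (f g : Lam p n) :
  prime p -> odd p -> 1 <= n ->
  f <> @lam0 p n ->
  im_nu (lmul f g) ->
  mu_eq f 0 ->
  (exists l, lam_eq f l /\ l < p ^ n.-1) ->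
  im_nu g.
Proof.
move=> pr _ n1 _ Hnu [_ Hmu0] [l [[m [f' [[Hm _] [Ef [Hip Hnip]]]] hl]]].
case: n n1 f g f' Hnu Hmu0 Hm Ef Hip Hnip hl => [//|k] _ f g f' Hnu Hmu0 Hm Ef Hip Hnip /= hl.
have p0 := prime_gt0 pr.
have m0 : m = 0.
  case: m Hm Ef => [//|m] Hm Ef; exfalso; apply: Hmu0.
  exists (fun t => zp_mul (zp_nat p (p ^ m)) (f' t)) => t.
  rewrite Ef; apply: zext => K /=.
  by rewrite modnMml modnMmr modnMml mulnA -(modnMml (p ^ 1 * _)) modnMmr modnMml expn1 -expnS.
subst m.
have ff' : f = f'.
  apply: functional_extensionality => t; rewrite Ef; apply: zext => K /=.
  by rewrite modnMml mul1n zsmall.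
subst f'.
have MN : (p ^ k <= p ^ k.+1)%N by rewrite expnS leq_pmull.
have hN : (l <= p ^ k.+1)%N by apply: ltnW; apply: leq_trans hl MN.
have hlow := ipow_low pr hN Hip.
have hlam : ((Tc (penc (red f)))`_l != 0)%R.
  apply/negP => /eqP h0; apply: Hnip; apply: low_ipow => //.
  - by rewrite expnS (leq_trans (prime_gt1 pr)) // leq_pmulr // expn_gt0 p0.
  - exact: leq_trans hl MN.
  - move=> i; rewrite ltnS leq_eqVlt => /orP [/eqP -> // | hi]; exact: hlow.
apply: (g_im pr Hnu hl); [exact: hlow | exact: hlam].
Qed.
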